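(* For every subset $I$ of $\mathbb{N}$, the monoid $M_I=\langle a,b,c,d \mid ab^ic=ab^id \ (i\in I)\rangle$ is a finitely generated strongly $0$-hyperbolic monoid.
   Context: Directed graphs may have loops and multiple edges; $d(u,v)$ is the length of a shortest directed path from $u$ to $v$ ($\infty$ if none). Out-ball $\overrightarrow{\mathcal{B}}_r(x)=\{y : d(x,y)\le r\}$, in-ball $\overleftarrow{\mathcal{B}}_r(x)=\{y : d(y,x)\le r\}$, extended to sets by union. A path $[x_0,\dots,x_n]$ is a geodesic if $n=d(x_0,x_n)$. A directed geodesic triangle is an ordered triple $(p,q,r)$ of geodesics with the end of $p$ equal to the start of $q$ and $p\circ q$ having the same start and end as $r$; it is $0$-thin if every vertex of $r$ lies in $\overrightarrow{\mathcal{B}}_0(p)\cup\overleftarrow{\mathcal{B}}_0(q)$, every vertex of $p$ lies in $\overrightarrow{\mathcal{B}}_0(r)\cup\overleftarrow{\mathcal{B}}_0(q)$, and every vertex of $q$ lies in $\overrightarrow{\mathcal{B}}_0(p)\cup\overleftarrow{\mathcal{B}}_0(r)$. A monoid is strongly $0$-hyperbolic if its right Cayley graph w.r.t. some finite generating set $A$ (vertex set the monoid, edge $m\to n$ for each $a\in A$ with $ma=n$) has all directed geodesic triangles $0$-thin. *)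

(* Defs.v *)
From Stdlib Require Import ClassicalEpsilon FunctionalExtensionality
  PropExtensionality ProofIrrelevance.
From Stdlib Require List.
From mathcomp Require Import all_boot.

Set Implicit Arguments.
Unset Strict Implicit.
Unset Printing Implicit Defensive.

Record monoid := Monoid {
  carrier :> Type;
  mmul : carrier -> carrier -> carrier;
  mone : carrier;
  mmulA : forall x y z, mmul x (mmul y z) = mmul (mmul x y) z;
  mmul1m : forall x, mmul mone x = x;
  mmulm1 : forall x, mmul x mone = x
}.

Section CayleyGraph.
Variable M : monoid.

Definition mprod (s : seq M) : M := foldr (@mmul M) (@mone M) s.

Definition generates (A : seq M) : Prop :=
  forall m : M, exists s : seq M, (forall x, List.In x s -> List.In x A) /\ mprod s = m.

(* Edge of the right Cayley graph w.r.t. A: m -> n iff m a = n for some a in A.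
   (Multiple edges do not matter for distances / vertex paths.) *)
Definition cedge (A : seq M) (m n : M) : Prop :=
  exists a, List.In a A /\ mmul m a = n.

Fixpoint cwalk (A : seq M) (x : M) (l : seq M) : Prop :=
  match l with
  | [::] => True
  | y :: l' => cedge A x y /\ cwalk A y l'
  end.

Definition dist_le (A : seq M) (u v : M) (r : nat) : Prop :=
  exists l, cwalk A u l /\ last u l = v /\ size l <= r.

Definition geodesic (A : seq M) (x : M) (l : seq M) : Prop :=
  cwalk A x l /\
  forall l', cwalk A x l' -> last x l' = last x l -> size l <= size l'.

Definition out_ball (A : seq M) (r : nat) (S : seq M) (y : M) : Prop :=
  exists x, List.In x S /\ dist_le A x y r.
Definition in_ball (A : seq M) (r : nat) (S : seq M) (y : M) : Prop :=
  exists x, List.In x S /\ dist_le A y x r.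

(* directed geodesic triangle (p, q, r) with p = xp::lp, q = xq::lq,
   r = xr::lr *)
Definition geodesic_triangle (A : seq M) (xp : M) (lp : seq M)
  (xq : M) (lq : seq M) (xr : M) (lr : seq M) : Prop :=
  geodesic A xp lp /\ geodesic A xq lq /\ geodesic A xr lr /\
  last xp lp = xq /\ xr = xp /\ last xr lr = last xq lq.

Definition thin_triangle (A : seq M) (delta : nat) (xp : M) (lp : seq M)
  (xq : M) (lq : seq M) (xr : M) (lr : seq M) : Prop :=
  [/\ (forall v, List.In v (xr :: lr) ->
         out_ball A delta (xp :: lp) v \/ in_ball A delta (xq :: lq) v),
      (forall v, List.In v (xp :: lp) ->
         out_ball A delta (xr :: lr) v \/ in_ball A delta (xq :: lq) v) &
      (forall v, List.In v (xq :: lq) ->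
         out_ball A delta (xp :: lp) v \/ in_ball A delta (xr :: lr) v)].

Definition finitely_generated : Prop := exists A : seq M, generates A.

Definition strongly_hyperbolic (delta : nat) : Prop :=
  exists A : seq M, generates A /\
    forall xp lp xq lq xr lr,
      geodesic_triangle A xp lp xq lq xr lr ->
      thin_triangle A delta xp lp xq lq xr lr.

End CayleyGraph.

Inductive letter := La | Lb | Lc | Ld.
Definition word := seq letter.

Inductive rel_MI (I : nat -> Prop) : word -> word -> Prop :=
| rel_MI_intro i : I i ->
    rel_MI I ([:: La] ++ nseq i Lb ++ [:: Lc]) ([:: La] ++ nseq i Lb ++ [:: Ld]).

Inductive cong (I : nat -> Prop) : word -> word -> Prop :=
| cong_base u v : rel_MI I u v -> cong I u v
| cong_refl u : cong I u u
| cong_sym u v : cong I u v -> cong I v u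
| cong_trans u v w : cong I u v -> cong I v w -> cong I u w
| cong_ctx x y u v : cong I u v -> cong I (x ++ u ++ y) (x ++ v ++ y).

Section Quotient.
Variable I : nat -> Prop.

Definition MI_car := { C : word -> Prop | exists w, C = cong I w }.

Definition cls (w : word) : MI_car := exist _ (cong I w) (ex_intro _ w erefl).

Definition rep (C : MI_car) : word :=
  proj1_sig (constructive_indefinite_description _ (proj2_sig C)).

Lemma cong_cls u v : cong I u v -> cls u = cls v.
Proof.
move=> h; apply: eq_sig_hprop => [C p q|]; first exact: proof_irrelevance.
rewrite /=; apply: functional_extensionality => w.
apply: propositional_extensionality; split => hw.
- by apply: cong_trans (cong_sym h) hw.
- by apply: cong_trans h hw.
Qed.

Lemma cls_rep C : cls (rep C) = C.
Proof.
apply: eq_sig_hprop => [D p q|]; first exact: proof_irrelevance.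
rewrite /rep; case: (constructive_indefinite_description _ _) => w /= ->.
by [].
Qed.

Lemma rep_cls u : cong I (rep (cls u)) u.
Proof.
rewrite /rep; case: (constructive_indefinite_description _ _) => w /= e.
have h : cong I u u by apply: cong_refl.
by rewrite e in h.
Qed.

Definition MI_mul (C D : MI_car) : MI_car := cls (rep C ++ rep D).
Definition MI_one : MI_car := cls [::].

Lemma cong_cat u u' v v' : cong I u u' -> cong I v v' -> cong I (u ++ v) (u' ++ v').
Proof.
move=> hu hv; apply: (@cong_trans _ _ (u' ++ v)).
- by have := cong_ctx [::] v hu; rewrite /= ?cats0.
- by have := cong_ctx u' [::] hv; rewrite /= ?cats0.
Qed.

Lemma MI_mul_cls u v : MI_mul (cls u) (cls v) = cls (u ++ v).
Proof. by apply: cong_cls; apply: cong_cat; apply: rep_cls. Qed.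

Lemma MI_mulA x y z : MI_mul x (MI_mul y z) = MI_mul (MI_mul x y) z.
Proof.
rewrite -(cls_rep x) -(cls_rep y) -(cls_rep z) !MI_mul_cls.
by rewrite catA.
Qed.

Lemma MI_mul1 x : MI_mul MI_one x = x.
Proof. by rewrite -(cls_rep x) /MI_one MI_mul_cls. Qed.

Lemma MI_mul1r x : MI_mul x MI_one = x.
Proof. by rewrite -(cls_rep x) /MI_one MI_mul_cls cats0. Qed.

End Quotient.

Definition M_I (I : nat -> Prop) : monoid :=
  @Monoid (MI_car I) (@MI_mul I) (MI_one I)
    (@MI_mulA I) (@MI_mul1 I) (@MI_mul1r I).

(* Main.v *)
Require Import Defs.
From mathcomp Require Import all_boot zify.
From Stdlib Require List.

Section Proof.
Variable I : nat -> Prop.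

Definition P2 (u v : word) := size u = size v /\ forall k, cong I (take k u) (take k v).

Lemma take_rcons_gen (s : word) (x : letter) k :
  take k (s ++ [:: x]) = if k <= size s then take k s else s ++ [:: x].
Proof.
rewrite take_cat; case: (leqP k (size s)) => h.
- case: ltnP => h'; first by [].
  have -> : k = size s by apply/eqP; rewrite eqn_leq h h'.
  by rewrite subnn take0 cats0 take_size.
- rewrite ltnNge (ltnW h) /= take_oversize //=; lia.
Qed.

Lemma cong_P2 u v : cong I u v -> P2 u v.
Proof.
elim=> {u v}.
- move=> u v [] i Ii; split; first by rewrite !size_cat.
  move=> k.
  have -> : [:: La] ++ nseq i Lb ++ [:: Lc] = (La :: nseq i Lb) ++ [:: Lc] by [].
  have -> : [:: La] ++ nseq i Lb ++ [:: Ld] = (La :: nseq i Lb) ++ [:: Ld] by [].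
  rewrite !take_rcons_gen.
  case: ifP => _; first exact: cong_refl.
  by apply: cong_base; constructor.
- by move=> u; split=> // k; apply: cong_refl.
- by move=> u v _ [h1 h2]; split=> // k; apply: cong_sym.
- move=> u v w _ [h1 h2] _ [h3 h4]; split; first by rewrite h1.
  by move=> k; apply: cong_trans (h2 k) (h4 k).
- move=> x y u v _ [h1 h2]; split; first by rewrite !size_cat h1.
  have e : cong I u v.
    by have := h2 (size u); rewrite {2}h1 !take_size.
  move=> k; rewrite !take_cat h1.
  case: ifP => _; first exact: cong_refl.
  case: ifP => _.
    by have := cong_ctx x [::] (h2 (k - size x)); rewrite !cats0.
  by have := cong_ctx x (take (k - size x - size v) y) e; rewrite !catA.
Qed.

Lemma cls_eq_cong s t : cls I s = cls I t -> cong I s t.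
Proof.
move=> e; have := f_equal (@proj1_sig _ _) e => /= e'.
have h : cong I s s := cong_refl _ _.
rewrite e' in h; exact: cong_sym.
Qed.

Lemma cls_cat_rep s t : cls I (rep (cls I s) ++ t) = cls I (s ++ t).
Proof. by apply: cong_cls; apply: cong_cat; [apply: rep_cls | apply: cong_refl]. Qed.

Definition Agen : seq (M_I I) := [:: cls I [:: La]; cls I [:: Lb]; cls I [:: Lc]; cls I [:: Ld]].

Lemma mprod_map (w : word) : mprod (M := M_I I) (map (fun g => cls I [:: g]) w) = cls I w.
Proof.
elim: w => [|g w IH] //=.
rewrite IH /=; exact: (MI_mul_cls I [:: g] w).
Qed.

Lemma gen : generates Agen.
Proof.
move=> m; exists (map (fun g => cls I [:: g]) (rep m)); split.
- move=> x; elim: (rep m) => [|g w IH] //= [<-|/IH //].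
  by case: g => /=; tauto.
- by rewrite mprod_map cls_rep.
Qed.

Lemma walk_char (x : M_I I) l : cwalk Agen x l ->
  exists w : word, (forall v, List.In v (x :: l) <->
      exists2 k, k <= size w & v = cls I (rep x ++ take k w))
   /\ last x l = cls I (rep x ++ w).
Proof.
elim: l x => [|y0 l IH] x /=.
- move=> _; exists [::]; split; last by rewrite cats0 cls_rep.
  move=> v; split.
  + by case=> // <-; exists 0 => //; rewrite take0 cats0 cls_rep.
  + by case=> k _ ->; rewrite /= cats0 cls_rep; left.
- case=> [[a [ha <-]] hw].
  have [g eg] : exists g, a = cls I [:: g].
    by move: ha => /= [<-|[<-|[<-|[<-|[]]]]]; eexists.
  subst a; set y := mmul x (cls I [:: g]) in hw *.
  have ey : forall t, cls I (rep y ++ t) = cls I (rep x ++ g :: t).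
    move=> t; rewrite /y /= /MI_mul cls_cat_rep -catA.
    apply: cong_cls; apply: cong_cat; first exact: cong_refl.
    by apply: (cong_cat (rep_cls I [:: g])); apply: cong_refl.
  have [w [hin hl]] := IH y hw.
  exists (g :: w); split; last by rewrite hl ey.
  move=> v; split.
  + case=> [<-|/hin [k hk ->]].
    * by exists 0 => //; rewrite cats0 cls_rep.
    * by exists k.+1 => //; rewrite ey.
  + case=> [[_ ->|k hk ->]].
    * by left; rewrite cats0 cls_rep.
    * by right; apply/hin; exists k => //; rewrite ey.
Qed.

Lemma take_size_cat (X s : word) k : take (size X + k) (X ++ s) = X ++ take k s.
Proof. by elim: X => //= x X ->. Qed.

Lemma thin xp lp xq lq xr lr :
  geodesic_triangle Agen xp lp xq lq xr lr -> thin_triangle Agen 0 xp lp xq lq xr lr.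
Proof.
case=> [[wp _] [[wq _] [[wr _] [e1 [e2 e3]]]]].
have [up [hp lp']] := (@walk_char xp _ wp).
have [uq [hq lq']] := (@walk_char xq _ wq).
have [ur [hr lr']] := (@walk_char xr _ wr).
subst xr; set X := rep xp in hp lp' hr lr'.
have eq1 : forall t, cls I (rep xq ++ t) = cls I (X ++ up ++ t).
  by move=> t; rewrite -e1 lp' cls_cat_rep catA.
have hc : cong I (X ++ ur) (X ++ up ++ uq).
  by apply: cls_eq_cong; rewrite -lr' e3 lq' eq1.
have [hs ht] := @cong_P2 _ _ hc.
have hsz : size ur = size up + size uq by move: hs; rewrite !size_cat; lia.
have key : forall k, cls I (X ++ take k ur) = cls I (X ++ take k (up ++ uq)).
  by move=> k; apply: cong_cls; rewrite -!take_size_cat; apply: ht.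
have here : forall S v, List.In v S -> out_ball Agen 0 S v.
  by move=> S v h; exists v; split => //; exists [::].
have here' : forall S v, List.In v S -> in_ball Agen 0 S v.
  by move=> S v h; exists v; split => //; exists [::].
split.
- move=> v /hr [k hk ->]; rewrite key.
  case: (leqP k (size up)) => hk'.
  + left; apply: here; apply/hp; exists k => //; by rewrite take_cat ltn_neqAle; case: eqP => [->|]; rewrite ?hk' ?take_size ?take_cat ?ltnn ?subnn ?take0 ?cats0.
  + right; apply: here'; apply/hq; exists (k - size up); first by lia.
    by rewrite eq1 take_cat ltnNge (ltnW hk').
- move=> v /hp [k hk ->]; left; apply: here; apply/hr; exists k; first by lia.
  rewrite key take_cat; case: ltngtP hk => // h _.
  by rewrite h subnn take0 cats0 take_size.
- move=> v /hq [k hk ->]; right; apply: here'; apply/hr; exists (size up + k); first by lia.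
  by rewrite key eq1 take_cat ltnNge leq_addr /= addKn.
Qed.

End Proof.

Theorem proposition7p3 (I : nat -> Prop) :
  finitely_generated (M_I I) /\ strongly_hyperbolic (M_I I) 0.
Proof.
split; first by exists (Agen I); apply: gen.
exists (Agen I); split; first exact: gen.
move=> *; exact: thin.
Qed.
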